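(* Let $X$ be a space, $E$ a Banach space, $p\in(1,\infty)$ and $q$ its conjugate index ($1/p+1/q=1$). Let $\{\phi_i\}_{i\in I}$ be a metric $p$-partition of unity on $X$, let $J\subseteq I$, and let $\{B_i\}_{i\in J}$ be bounded operators on $\ell^p_E(X)$ with $M:=\sup_{i\in J}\|B_i\|<\infty$. Then the sum $\sum_{i\in J}\phi_i^{p/q}B_i\phi_i$ converges strongly to a band operator on $\ell^p_E(X)$ of norm at most $M$.
   Context: A *space* is a metric space $(X,d)$ that is strongly discrete (the set $\{d(x,y):x,y\in X\}$ is a discrete subset of $\mathbb{R}$) and has bounded geometry (for every $r>0$, $\sup_{x\in X}|B(x;r)|<\infty$, where $B(x;r)=\{y\in X: d(x,y)\le r\}$). $\ell^p_E(X)$ is the Banach space of $p$-summable functions $X\to E$; a bounded function $\phi:X\to\mathbb{C}$ acts on it by pointwise multiplication. A band operator is a bounded operator whose matrix entries $A_{xy}\in\mathcal{L}(E)$ (defined by $A_{xy}e=(A(\delta_ye))(x)$) vanish whenever $d(x,y)$ exceeds some fixed bound. A metric $p$-partition of unity on $X$ is a family $\{\phi_i:X\to[0,1]\}_{i\in I}$ such that (i) there is $N\in\mathbb{N}$ such that for each $x$ at most $N$ of the numbers $\phi_i(x)$ are nonzero; (ii) $\sup_i\operatorname{diam}\{x:\phi_i(x)\neq0\}<\infty$; (iii) $\sum_{i\in I}\phi_i(x)^p=1$ for all $x\in X$. *)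

(* Defs.v *)
From Stdlib Require Import Reals List ClassicalDescription.
Open Scope R_scope.

Record Cplx := mkC { Cre : R; Cim : R }.
Definition Cadd (a b : Cplx) : Cplx := mkC (Cre a + Cre b) (Cim a + Cim b).
Definition Cmul (a b : Cplx) : Cplx :=
  mkC (Cre a * Cre b - Cim a * Cim b) (Cre a * Cim b + Cim a * Cre b).
Definition Cabs (a : Cplx) : R := sqrt (Cre a ^ 2 + Cim a ^ 2).
Definition RtoC (r : R) : Cplx := mkC r 0.

Record CBanach := {
  bcar :> Type;
  badd : bcar -> bcar -> bcar;
  bzero : bcar;
  bopp : bcar -> bcar;
  bscal : Cplx -> bcar -> bcar;
  bnorm : bcar -> R;
  badd_assoc : forall u v w, badd u (badd v w) = badd (badd u v) w;
  badd_comm : forall u v, badd u v = badd v u;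
  badd_zero : forall u, badd u bzero = u;
  badd_opp : forall u, badd u (bopp u) = bzero;
  bscal_addv : forall a u v, bscal a (badd u v) = badd (bscal a u) (bscal a v);
  bscal_adds : forall a b u, bscal (Cadd a b) u = badd (bscal a u) (bscal b u);
  bscal_mul : forall a b u, bscal (Cmul a b) u = bscal a (bscal b u);
  bscal_one : forall u, bscal (RtoC 1) u = u;
  bnorm_eq0 : forall u, bnorm u = 0 -> u = bzero;
  bnorm_scal : forall a u, bnorm (bscal a u) = Cabs a * bnorm u;
  bnorm_triangle : forall u v, bnorm (badd u v) <= bnorm u + bnorm v;
  bcomplete : forall s : nat -> bcar,
    (forall eps, 0 < eps -> exists N, forall m n, (N <= m)%nat -> (N <= n)%nat ->
        bnorm (badd (s m) (bopp (s n))) < eps) ->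
    exists l, forall eps, 0 < eps -> exists N, forall n, (N <= n)%nat ->
        bnorm (badd (s n) (bopp l)) < eps
}.
Arguments badd {_}. Arguments bzero {_}. Arguments bopp {_}.
Arguments bscal {_}. Arguments bnorm {_}.

(* x^a for x >= 0, a > 0, with the convention 0^a = 0 *)
Definition rpow (x a : R) : R := if Rlt_dec 0 x then Rpower x a else 0.

Definition Rsum_list (l : list R) : R := fold_right Rplus 0 l.

(* supremum of a set of reals (0 if empty or unbounded) *)
Definition Rsup (P : R -> Prop) : R :=
  match excluded_middle_informative (bound P /\ exists x, P x) with
  | left h => proj1_sig (completeness P (proj1 h) (proj2 h))
  | right _ => 0
  end.

Definition ball {X : Type} (d : X -> X -> R) (x : X) (r : R) : X -> Prop :=
  fun y => d x y <= r.

Definition is_space (X : Type) (d : X -> X -> R) : Prop :=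
  (forall x y, 0 <= d x y) /\
  (forall x y, d x y = 0 <-> x = y) /\
  (forall x y, d x y = d y x) /\
  (forall x y z, d x z <= d x y + d y z) /\
  (* strongly discrete: every distance value is isolated in the set of distances *)
  (forall x y, exists eps, 0 < eps /\
      forall x' y', Rabs (d x' y' - d x y) < eps -> d x' y' = d x y) /\
  (* bounded geometry: for every r > 0 the balls B(x;r) have uniformly bounded size *)
  (forall r, 0 < r -> exists N : nat, forall x, exists l : list X,
      (length l <= N)%nat /\ forall y, ball d x r y -> In y l).

Definition metric_p_partition (X : Type) (d : X -> X -> R) (p : R)
    (I : Type) (phi : I -> X -> R) : Prop :=
  (forall i x, 0 <= phi i x <= 1) /\
  (exists N : nat, forall x, exists l : list I,
      (length l <= N)%nat /\ forall i, phi i x <> 0 -> In i l) /\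
  (exists D, forall i x y, phi i x <> 0 -> phi i y <> 0 -> d x y <= D) /\
  (* (iii) sum_i phi_i(x)^p = 1 (the sum has finitely many nonzero terms by (i)) *)
  (forall x (l : list I), NoDup l -> (forall i, phi i x <> 0 -> In i l) ->
      Rsum_list (map (fun i => rpow (phi i x) p) l) = 1).

Section Lp.
Context {E : CBanach} {X : Type}.

Definition fadd (f g : X -> E) : X -> E := fun x => badd (f x) (g x).
Definition fsub (f g : X -> E) : X -> E := fun x => badd (f x) (bopp (g x)).
Definition fscal (c : Cplx) (f : X -> E) : X -> E := fun x => bscal c (f x).
Definition mult_op (g : X -> R) (f : X -> E) : X -> E :=
  fun x => bscal (RtoC (g x)) (f x).

Definition lp_sums (p : R) (f : X -> E) : R -> Prop :=
  fun s => exists l : list X, NoDup l /\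
     s = Rsum_list (map (fun x => rpow (bnorm (f x)) p) l).

Definition in_lp (p : R) (f : X -> E) : Prop := bound (lp_sums p f).

Definition lp_norm (p : R) (f : X -> E) : R := rpow (Rsup (lp_sums p f)) (/ p).

Definition is_bounded_op (p : R) (T : (X -> E) -> (X -> E)) : Prop :=
  (forall f, in_lp p f -> in_lp p (T f)) /\
  (forall f g, in_lp p f -> in_lp p g -> forall x, T (fadd f g) x = badd (T f x) (T g x)) /\
  (forall c f, in_lp p f -> forall x, T (fscal c f) x = bscal c (T f x)) /\
  (exists C, forall f, in_lp p f -> lp_norm p (T f) <= C * lp_norm p f).

Definition op_norm_le (p : R) (T : (X -> E) -> (X -> E)) (M : R) : Prop :=
  forall f, in_lp p f -> lp_norm p (T f) <= M * lp_norm p f.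

Definition delta (d : X -> X -> R) (y : X) (e : E) : X -> E :=
  fun x => if Req_EM_T (d x y) 0 then e else bzero.

(* band operator: matrix entries A_xy e = (A (delta_y e))(x) vanish for d(x,y) > r *)
Definition is_band_op (d : X -> X -> R) (p : R) (T : (X -> E) -> (X -> E)) : Prop :=
  is_bounded_op p T /\
  exists r, forall x y, r < d x y -> forall e, T (delta d y e) x = bzero.

End Lp.

Definition Esum {E : CBanach} (l : list E) : E := fold_right badd bzero l.

(* Main.v *)
Require Import Defs.
From Stdlib Require Import Reals List Permutation Lra Classical ClassicalEpsilon FunctionalExtensionality.
From Coquelicot Require Import Coquelicot.
Require Import Defs.
Open Scope R_scope.

Lemma rpow_pos x a : 0 < x -> rpow x a = Rpower x a.
Proof. intros H; unfold rpow; destruct (Rlt_dec 0 x); [reflexivity|lra]. Qed.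
Lemma rpow_le0 x a : x <= 0 -> rpow x a = 0.
Proof. intros H; unfold rpow; destruct (Rlt_dec 0 x); [lra|reflexivity]. Qed.
Lemma rpow_0 a : rpow 0 a = 0.
Proof. apply rpow_le0; lra. Qed.
Lemma rpow_ge0 x a : 0 <= rpow x a.
Proof. unfold rpow; destruct (Rlt_dec 0 x); [left; unfold Rpower; apply exp_pos|lra]. Qed.
Lemma rpow_gt0 x a : 0 < x -> 0 < rpow x a.
Proof. intros H; rewrite rpow_pos by lra; unfold Rpower; apply exp_pos. Qed.
Lemma rpow_mult x y a : 0 <= x -> 0 <= y -> rpow (x*y) a = rpow x a * rpow y a.
Proof.
  intros Hx Hy. destruct Hx as [Hx|Hx]; [destruct Hy as [Hy|Hy]|].
  - rewrite !rpow_pos by nra. symmetry; apply Rpower_mult_distr; lra.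
  - subst. rewrite Rmult_0_r, rpow_0; ring.
  - subst. rewrite Rmult_0_l, rpow_0; ring.
Qed.
Lemma rpow_rpow x a b : 0 <= x -> rpow (rpow x a) b = rpow x (a*b).
Proof.
  intros [Hx|Hx].
  - rewrite (rpow_pos x) by lra. rewrite rpow_pos by (unfold Rpower; apply exp_pos).
    rewrite rpow_pos by lra. apply Rpower_mult.
  - subst. rewrite !rpow_0; reflexivity.
Qed.
Lemma rpow_1 x : 0 <= x -> rpow x 1 = x.
Proof. intros [Hx|Hx]. rewrite rpow_pos by lra; apply Rpower_1; lra. subst; apply rpow_0. Qed.
Lemma rpow_plus x a b : 0 < x -> rpow x (a+b) = rpow x a * rpow x b.
Proof. intros H; rewrite !rpow_pos by lra; apply Rpower_plus. Qed.
Lemma rpow_one a : rpow 1 a = 1.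
Proof. rewrite rpow_pos by lra. unfold Rpower; rewrite ln_1, Rmult_0_r; apply exp_0. Qed.
Lemma rpow_lt x y a : 0 < a -> 0 <= x < y -> rpow x a < rpow y a.
Proof.
  intros Ha [[Hx|Hx] Hxy].
  - rewrite !rpow_pos by lra. unfold Rpower. apply exp_increasing.
    apply Rmult_lt_compat_l; auto. apply ln_increasing; lra.
  - subst. rewrite rpow_0. apply rpow_gt0; lra.
Qed.
Lemma rpow_le x y a : 0 < a -> 0 <= x <= y -> rpow x a <= rpow y a.
Proof.
  intros Ha [Hx [Hxy|Hxy]]. left; apply rpow_lt; lra. subst; lra.
Qed.
Lemma rpow_le1 x a : 0 < a -> 0 <= x <= 1 -> rpow x a <= 1.
Proof. intros; rewrite <- (rpow_one a); apply rpow_le; lra. Qed.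
Lemma rpow_inv x a : 0 < a -> 0 <= x -> rpow (rpow x a) (/a) = x.
Proof. intros Ha Hx. rewrite rpow_rpow by lra. rewrite Rinv_r by lra. apply rpow_1; lra. Qed.

Lemma exp_bern p t : 1 <= p -> 1 + p * (exp t - 1) <= exp (p * t).
Proof.
  intros Hp.
  set (h := fun s => exp (p*s) - p * exp s).
  assert (Hd : forall s, is_derive h s (p * exp (p*s) - p * exp s)).
  { intros s. unfold h. auto_derive; auto. ring. }
  destruct (MVT_gen h 0 t (fun s => p * exp (p*s) - p * exp s)) as [c [Hc Heq]].
  { intros; apply Hd. }
  { intros x _. apply derivable_continuous_pt. eexists. apply is_derive_Reals. apply Hd. }
  unfold h in Heq. rewrite Rmult_0_r, exp_0 in Heq.
  assert (p * exp (p * c) - p * exp c = p * (exp (p*c) - exp c)) by ring.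
  destruct (Rle_lt_dec 0 t) as [Ht|Ht].
  - rewrite Rmin_left in Hc by lra. rewrite Rmax_right in Hc by lra.
    assert (Hcc : c <= p*c) by nra.
    assert (exp c <= exp (p*c)).
    { destruct (Rle_lt_or_eq_dec _ _ Hcc) as [E|E]. left; apply exp_increasing; exact E. rewrite <- E; lra. }
    assert (0 <= (p * exp (p * c) - p * exp c) * (t - 0)).
    { rewrite H. apply Rmult_le_pos; [|lra]. apply Rmult_le_pos; lra. } lra.
  - rewrite Rmin_right in Hc by lra. rewrite Rmax_left in Hc by lra.
    assert (Hcc : p*c <= c) by nra.
    assert (exp (p*c) <= exp c).
    { destruct (Rle_lt_or_eq_dec _ _ Hcc) as [E|E]. left; apply exp_increasing; exact E. rewrite E; lra. }
    assert (0 <= (p * exp (p * c) - p * exp c) * (t - 0)).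
    { rewrite H. replace (p * (exp (p * c) - exp c) * (t - 0)) with ((p * (exp c - exp (p * c))) * (0 - t)) by ring.
      apply Rmult_le_pos; [|lra]. apply Rmult_le_pos; lra. } lra.
Qed.

Lemma bernoulli u p : 0 <= u -> 1 <= p -> 1 + p * (u - 1) <= rpow u p.
Proof.
  intros [Hu|Hu] Hp.
  - rewrite rpow_pos by lra. unfold Rpower. rewrite <- (exp_ln u) at 1 by lra.
    apply exp_bern; lra.
  - subst. rewrite rpow_0. lra.
Qed.

Definition RS {T : Type} (f : T -> R) (l : list T) : R := Rsum_list (map f l).

Lemma Rsum_app l1 l2 : Rsum_list (l1 ++ l2) = Rsum_list l1 + Rsum_list l2.
Proof. induction l1; simpl. ring. rewrite IHl1; ring. Qed.
Lemma Rsum_perm l l' : Permutation l l' -> Rsum_list l = Rsum_list l'.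
Proof. induction 1; simpl; try lra. Qed.
Lemma RS_perm {T} (f : T -> R) l l' : Permutation l l' -> RS f l = RS f l'.
Proof. intros H; apply Rsum_perm, Permutation_map, H. Qed.
Lemma RS_app {T} (f : T -> R) l1 l2 : RS f (l1 ++ l2) = RS f l1 + RS f l2.
Proof. unfold RS; rewrite map_app; apply Rsum_app. Qed.
Lemma RS_nil {T} (f : T -> R) : RS f nil = 0. Proof. reflexivity. Qed.
Lemma RS_cons {T} (f : T -> R) a l : RS f (a :: l) = f a + RS f l. Proof. reflexivity. Qed.
Lemma RS_nonneg {T} (f : T -> R) l : (forall x, In x l -> 0 <= f x) -> 0 <= RS f l.
Proof. induction l; intros H; rewrite ?RS_nil, ?RS_cons. lra.
  assert (0 <= f a) by (apply H; left; auto). assert (0 <= RS f l) by (apply IHl; intros; apply H; right; auto). lra. Qed.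
Lemma RS_le {T} (f g : T -> R) l : (forall x, In x l -> f x <= g x) -> RS f l <= RS g l.
Proof. induction l; intros H; rewrite ?RS_nil, ?RS_cons. lra.
  assert (f a <= g a) by (apply H; left; auto). assert (RS f l <= RS g l) by (apply IHl; intros; apply H; right; auto). lra. Qed.
Lemma RS_ext {T} (f g : T -> R) l : (forall x, In x l -> f x = g x) -> RS f l = RS g l.
Proof. induction l; intros H; rewrite ?RS_nil, ?RS_cons. lra.
  rewrite (H a) by (left; auto). rewrite IHl by (intros; apply H; right; auto). lra. Qed.
Lemma RS_add {T} (f g : T -> R) l : RS (fun x => f x + g x) l = RS f l + RS g l.
Proof. induction l; rewrite ?RS_nil, ?RS_cons. lra. rewrite IHl; ring. Qed.
Lemma RS_scal {T} (f : T -> R) c l : RS (fun x => c * f x) l = c * RS f l.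
Proof. induction l; rewrite ?RS_nil, ?RS_cons. ring. rewrite IHl; ring. Qed.
Lemma RS_exchange {T U} (a : T -> U -> R) lt lu :
  RS (fun t => RS (fun u => a t u) lu) lt = RS (fun u => RS (fun t => a t u) lt) lu.
Proof.
  induction lt; rewrite ?RS_nil, ?RS_cons.
  - symmetry. induction lu; rewrite ?RS_nil, ?RS_cons; auto. rewrite IHlu, RS_nil. ring.
  - rewrite IHlt. rewrite <- RS_add. apply RS_ext. intros; rewrite RS_cons; ring.
Qed.

Lemma RS_incl {T} (f : T -> R) l1 l2 : NoDup l1 -> NoDup l2 -> incl l1 l2 ->
  (forall x, In x l2 -> 0 <= f x) -> RS f l1 <= RS f l2.
Proof.
  revert l2; induction l1 as [|a l1 IH]; intros l2 N1 N2 Hi Hf.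
  - rewrite RS_nil; apply RS_nonneg; auto.
  - assert (Ha : In a l2) by (apply Hi; left; auto).
    destruct (in_split _ _ Ha) as [la [lb E]]. subst l2.
    rewrite <- (RS_perm f _ _ (Permutation_middle la lb a)).
    rewrite !RS_cons.
    apply NoDup_cons_iff in N1. destruct N1 as [Na N1].
    assert (N2' : NoDup (a :: la ++ lb)) by (eapply Permutation_NoDup; [apply Permutation_sym, Permutation_middle|auto]).
    apply NoDup_cons_iff in N2'. destruct N2' as [_ N2'].
    assert (RS f l1 <= RS f (la ++ lb)).
    { apply IH; auto.
      - intros x Hx. assert (In x (la ++ a :: lb)) by (apply Hi; right; auto).
        apply in_app_or in H. apply in_or_app. destruct H as [H|[H|H]]; auto. subst; contradiction.
      - intros x Hx; apply Hf. apply in_app_or in Hx; apply in_or_app; destruct Hx; auto; right; right; auto. }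
    lra.
Qed.

Lemma nodup_sub {T} (l : list T) (P : T -> Prop) :
  exists l', NoDup l' /\ forall t, In t l' <-> (In t l /\ P t).
Proof.
  induction l as [|a l [l' [N H]]].
  - exists nil; split; [constructor|]. intros t; simpl; tauto.
  - destruct (classic (P a /\ ~ In a l')) as [[Pa Na]|C].
    + exists (a :: l'); split. constructor; auto.
      intros t; simpl; rewrite H. split.
      * intros [E|[H1 H2]]; [subst; auto|auto].
      * intros [[E|H1] H2]; [left; auto|right; auto].
    + exists l'; split; auto. intros t; rewrite H; simpl. split.
      * intros [H1 H2]; auto.
      * intros [[E|H1] H2]; [subst|auto].
        destruct (classic (In t l')) as [I|I]; [apply H in I; auto|exfalso; apply C; auto].
Qed.

Lemma split_perm {T} (l : list T) (P : T -> Prop) : NoDup l ->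
  exists l1 l2, NoDup l1 /\ NoDup l2 /\ Permutation l (l1 ++ l2) /\
    (forall t, In t l1 <-> (In t l /\ P t)) /\ (forall t, In t l2 <-> (In t l /\ ~ P t)).
Proof.
  intros N.
  destruct (nodup_sub l P) as [l1 [N1 H1]].
  destruct (nodup_sub l (fun t => ~ P t)) as [l2 [N2 H2]].
  exists l1, l2; repeat split; auto.
  - apply NoDup_Permutation; auto.
    + apply NoDup_app; auto. intros a A1 A2. apply H1 in A1; apply H2 in A2. tauto.
    + intros x; rewrite in_app_iff, H1, H2. split; [|tauto]. intros Hx. destruct (classic (P x)); tauto.
  - apply H1; auto. - apply H1; auto. - intros; apply H1; tauto.
  - apply H2; auto. - apply H2; auto. - intros; apply H2; tauto.
Qed.

Lemma rpow_split x p : 0 <= x -> rpow x p = rpow x (p-1) * x.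
Proof.
  intros [Hx|Hx].
  - replace p with ((p-1)+1) at 1 by ring. rewrite rpow_plus by auto. rewrite rpow_1; lra.
  - subst. rewrite !rpow_0; ring.
Qed.

Lemma holder_pt w a s p : 1 < p -> 0 <= w -> 0 <= a -> 0 < s ->
  rpow w p * rpow s p + p * rpow s (p-1) * (rpow w (p-1) * a) - p * rpow s p * rpow w p
  <= rpow a p.
Proof.
  intros Hp [Hw|Hw] Ha Hs.
  - set (u := a / (w*s)).
    assert (Hu : 0 <= u) by (unfold u; apply Rmult_le_pos; [auto|left; apply Rinv_0_lt_compat; nra]).
    assert (Ea : a = u * (w*s)) by (unfold u; field; lra).
    assert (B := bernoulli u p Hu ltac:(lra)).
    assert (K0 : 0 < rpow w p * rpow s p) by (apply Rmult_lt_0_compat; apply rpow_gt0; lra).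
    replace (rpow a p) with (rpow (u*(w*s)) p) by (rewrite <- Ea; auto).
    rewrite rpow_mult, rpow_mult by nra.
    rewrite (rpow_split w p), (rpow_split s p) by lra.
    rewrite (rpow_split w p), (rpow_split s p) in K0 by lra.
    rewrite Ea.
    set (W1 := rpow w (p-1)) in *. set (S1 := rpow s (p-1)) in *.
    assert (Hk : (W1 * w * (S1 * s)) * (1 + p * (u - 1)) <= (W1 * w * (S1 * s)) * rpow u p).
    { apply Rmult_le_compat_l; lra. }
    replace (W1 * w * (S1 * s) + p * S1 * (W1 * (u * (w * s))) - p * (S1 * s) * (W1 * w))
      with ((W1 * w * (S1 * s)) * (1 + p * (u - 1))) by ring.
    replace (rpow u p * (W1 * w * (S1 * s))) with ((W1 * w * (S1 * s)) * rpow u p) by ring.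
    exact Hk.
  - subst. rewrite !rpow_0. assert (H := rpow_ge0 a p). lra.
Qed.

Lemma holder_list {T} (w a : T -> R) (l : list T) p : 1 < p ->
  (forall i, In i l -> 0 <= w i) -> (forall i, In i l -> 0 <= a i) ->
  RS (fun i => rpow (w i) p) l <= 1 ->
  rpow (RS (fun i => rpow (w i) (p-1) * a i) l) p <= RS (fun i => rpow (a i) p) l.
Proof.
  intros Hp Hw Ha HW.
  set (s := RS (fun i => rpow (w i) (p-1) * a i) l).
  assert (Hs : 0 <= s).
  { apply RS_nonneg. intros; apply Rmult_le_pos; [apply rpow_ge0|auto]. }
  destruct Hs as [Hs|Hs].
  - eapply Rle_trans; [|apply RS_le; intros i Hi; apply (holder_pt (w i) (a i) s p); auto].
    set (S := rpow s p). set (S1 := rpow s (p-1)).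
    rewrite (RS_ext _ (fun i => (S - p * S) * rpow (w i) p + (p * S1) * (rpow (w i) (p-1) * a i)))
      by (intros; ring).
    rewrite RS_add, !RS_scal. fold s.
    assert (ES : S = S1 * s) by (unfold S, S1; apply rpow_split; lra).
    assert (0 <= S) by apply rpow_ge0.
    assert (0 <= RS (fun i => rpow (w i) p) l) by (apply RS_nonneg; intros; apply rpow_ge0).
    assert (E2: p * S1 * s = p * S) by (rewrite ES; ring). rewrite E2.
    set (W := RS (fun i : T => rpow (w i) p) l) in *.
    assert (0 <= S * ((p-1)*(1-W))) by (apply Rmult_le_pos; [lra|apply Rmult_le_pos; lra]). nra.
  - rewrite <- Hs, rpow_0. apply RS_nonneg; intros; apply rpow_ge0.
Qed.

Lemma Cabs_RtoC r : Cabs (RtoC r) = Rabs r.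
Proof. unfold Cabs, RtoC; cbn [Cre Cim]. replace (r^2 + 0^2) with (Rsqr r) by (unfold Rsqr; ring). apply sqrt_Rsqr_abs. Qed.

Lemma zero_add (E : CBanach) (u : E) : badd bzero u = u.
Proof. rewrite badd_comm; apply badd_zero. Qed.

Lemma self_add_zero (E : CBanach) (v : E) : badd v v = v -> v = bzero.
Proof.
  intros H.
  assert (H0 : badd (badd v v) (bopp v) = v) by (rewrite <- badd_assoc, badd_opp, badd_zero; auto).
  rewrite H, badd_opp in H0. auto.
Qed.

Lemma bscal0 (E : CBanach) (u : E) : bscal (RtoC 0) u = bzero.
Proof.
  apply self_add_zero. rewrite <- bscal_adds. f_equal. unfold Cadd, RtoC; simpl; f_equal; ring.
Qed.
Lemma scal_zero (E : CBanach) c : bscal c (@bzero E) = bzero.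
Proof. apply self_add_zero. rewrite <- bscal_addv, badd_zero. reflexivity. Qed.

Lemma opp_unique (E : CBanach) (a b : E) : badd a b = bzero -> b = bopp a.
Proof.
  intros H. rewrite <- (badd_zero _ b). rewrite <- (badd_opp _ a). rewrite badd_assoc.
  rewrite (badd_comm _ b a), H. apply zero_add.
Qed.

Lemma bopp_scal (E : CBanach) (u : E) : bopp u = bscal (RtoC (-1)) u.
Proof.
  symmetry; apply opp_unique. rewrite <- (bscal_one _ u) at 1. rewrite <- bscal_adds.
  replace (Cadd (RtoC 1) (RtoC (-1))) with (RtoC 0) by (unfold Cadd, RtoC; simpl; f_equal; ring).
  apply bscal0.
Qed.

Lemma bnorm0 (E : CBanach) : bnorm (@bzero E) = 0.
Proof. rewrite <- (bscal0 E bzero), bnorm_scal, Cabs_RtoC, Rabs_R0. ring. Qed.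

Lemma bnorm_rscal (E : CBanach) r (u : E) : bnorm (bscal (RtoC r) u) = Rabs r * bnorm u.
Proof. rewrite bnorm_scal, Cabs_RtoC. reflexivity. Qed.

Lemma bnorm_opp (E : CBanach) (u : E) : bnorm (bopp u) = bnorm u.
Proof. rewrite bopp_scal, bnorm_rscal. rewrite Rabs_left by lra; ring. Qed.

Lemma bnorm_ge0 (E : CBanach) (u : E) : 0 <= bnorm u.
Proof.
  assert (H := bnorm_triangle _ u (bopp u)). rewrite badd_opp, bnorm0, bnorm_opp in H. lra.
Qed.

Lemma Esum_norm (E : CBanach) (l : list E) : bnorm (Esum l) <= Rsum_list (map bnorm l).
Proof.
  induction l; simpl. rewrite bnorm0; lra.
  eapply Rle_trans; [apply bnorm_triangle|]. lra.
Qed.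

Lemma Esum_perm (E : CBanach) (l l' : list E) : Permutation l l' -> Esum l = Esum l'.
Proof.
  induction 1; simpl; auto.
  - rewrite IHPermutation; auto.
  - rewrite !badd_assoc, (badd_comm _ y x); auto.
  - congruence.
Qed.

Lemma Esum_app (E : CBanach) (l1 l2 : list E) : Esum (l1 ++ l2) = badd (Esum l1) (Esum l2).
Proof. induction l1; simpl. rewrite zero_add; auto. rewrite IHl1, badd_assoc; auto. Qed.

Lemma Esum_zero (E : CBanach) (l : list E) : (forall x, In x l -> x = bzero) -> Esum l = bzero.
Proof. induction l; simpl; intros H; auto. rewrite (H a), IHl by auto. apply badd_zero. Qed.

Lemma Esum_add {T} (E : CBanach) (f g : T -> E) l :
  Esum (map (fun i => badd (f i) (g i)) l) = badd (Esum (map f l)) (Esum (map g l)).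
Proof.
  induction l; simpl. rewrite badd_zero; auto. rewrite IHl.
  rewrite !badd_assoc. f_equal. rewrite <- !badd_assoc. f_equal. apply badd_comm.
Qed.

Lemma Esum_scal {T} (E : CBanach) c (f : T -> E) l :
  Esum (map (fun i => bscal c (f i)) l) = bscal c (Esum (map f l)).
Proof. induction l; simpl. rewrite scal_zero; auto. rewrite IHl, bscal_addv; auto. Qed.

Lemma sub_add_cancel (E : CBanach) (a r : E) : badd a (bopp (badd a r)) = bopp r.
Proof.
  assert (H : bopp (badd a r) = badd (bopp a) (bopp r)).
  { symmetry; apply opp_unique.
    rewrite badd_assoc. rewrite (badd_comm _ a r), <- (badd_assoc _ r a), badd_opp, badd_zero, badd_opp. auto. }
  rewrite H, badd_assoc, badd_opp, zero_add; auto.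
Qed.

Definition Pp {E : CBanach} {X : Type} (p : R) (g : X -> E) : R := Rsup (lp_sums p g).
Definition nrm {E : CBanach} {X : Type} (p : R) (g : X -> E) (x : X) : R := rpow (bnorm (g x)) p.

Lemma Rsup_ub (S : R -> Prop) s : bound S -> S s -> s <= Rsup S.
Proof.
  intros Hb Hs. unfold Rsup. destruct (ClassicalDescription.excluded_middle_informative (bound S /\ exists x, S x)) as [h|h].
  - destruct (completeness S (proj1 h) (proj2 h)) as [m [Hm1 Hm2]]; simpl. apply Hm1; auto.
  - exfalso; apply h; split; eauto.
Qed.
Lemma Rsup_le (S : R -> Prop) c : (forall s, S s -> s <= c) -> 0 <= c -> Rsup S <= c.
Proof.
  intros H Hc. unfold Rsup. destruct (ClassicalDescription.excluded_middle_informative (bound S /\ exists x, S x)) as [h|h]; auto.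
  destruct (completeness S (proj1 h) (proj2 h)) as [m [Hm1 Hm2]]; simpl. apply Hm2. intros s Hs; auto.
Qed.
Lemma Rsup_approx (S : R -> Prop) s0 d : bound S -> S s0 -> 0 < d -> exists s, S s /\ Rsup S - d < s.
Proof.
  intros Hb Hs0 Hd. apply NNPP; intros C.
  assert (U : forall s, S s -> s <= Rsup S - d).
  { intros s Hs. apply Rnot_lt_le. intros L. apply C; eauto. }
  unfold Rsup in U. destruct (ClassicalDescription.excluded_middle_informative (bound S /\ exists x, S x)) as [h|h].
  - destruct (completeness S (proj1 h) (proj2 h)) as [m [Hm1 Hm2]]; simpl in U.
    assert (m <= m - d) by (apply Hm2; intros s Hs; auto). lra.
  - apply h; split; eauto.
Qed.

Lemma lp_sums_nil {E : CBanach} {X : Type} p (g : X -> E) : lp_sums p g 0.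
Proof. exists nil; split; [constructor|reflexivity]. Qed.

Lemma Pp_ge0 {E : CBanach} {X : Type} p (g : X -> E) : 0 <= Pp p g.
Proof.
  unfold Pp, Rsup. destruct (ClassicalDescription.excluded_middle_informative (bound (lp_sums p g) /\ exists x, lp_sums p g x)) as [h|h]; [|lra].
  destruct (completeness _ (proj1 h) (proj2 h)) as [m [Hm1 Hm2]]; simpl. apply Hm1, lp_sums_nil.
Qed.

Lemma sum_le_Pp {E : CBanach} {X : Type} p (g : X -> E) l : in_lp p g -> NoDup l -> RS (nrm p g) l <= Pp p g.
Proof. intros H N. apply Rsup_ub; auto. exists l; split; auto. Qed.

Lemma Pp_le {E : CBanach} {X : Type} p (g : X -> E) c :
  (forall l, NoDup l -> RS (nrm p g) l <= c) -> 0 <= c -> in_lp p g /\ Pp p g <= c.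
Proof.
  intros H Hc. split.
  - exists c. intros s [l [N E1]]. subst. apply H; auto.
  - apply Rsup_le; auto. intros s [l [N E1]]. subst. apply H; auto.
Qed.

Lemma lp_approx {E : CBanach} {X : Type} p (g : X -> E) d : in_lp p g -> 0 < d ->
  exists l, NoDup l /\ Pp p g - d < RS (nrm p g) l.
Proof.
  intros H Hd. destruct (Rsup_approx _ 0 d H (lp_sums_nil p g) Hd) as [s [[l [N E1]] Hs]].
  exists l; split; auto. subst; auto.
Qed.

Lemma lpn_eq {E : CBanach} {X : Type} p (g : X -> E) : lp_norm p g = rpow (Pp p g) (/p).
Proof. reflexivity. Qed.

Lemma lpn_le_of_Pp {E : CBanach} {X : Type} p M (f g : X -> E) : 0 < p -> 0 <= M ->
  Pp p g <= rpow M p * Pp p f -> lp_norm p g <= M * lp_norm p f.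
Proof.
  intros Hp HM H. rewrite !lpn_eq.
  assert (0 < /p) by (apply Rinv_0_lt_compat; auto).
  eapply Rle_trans. apply rpow_le; [auto|split; [apply Pp_ge0|exact H]].
  rewrite rpow_mult by (apply rpow_ge0 || apply Pp_ge0). rewrite rpow_inv by auto. lra.
Qed.

Lemma Pp_le_of_lpn {E : CBanach} {X : Type} p M (f g : X -> E) : 0 < p -> 0 <= M ->
  lp_norm p g <= M * lp_norm p f -> Pp p g <= rpow M p * Pp p f.
Proof.
  intros Hp HM H. rewrite !lpn_eq in H.
  assert (0 < /p) by (apply Rinv_0_lt_compat; auto).
  assert (E1 : forall y, 0 <= y -> rpow (rpow y (/p)) p = y).
  { intros y Hy. rewrite rpow_rpow by auto. rewrite Rinv_l by lra. apply rpow_1; auto. }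
  rewrite <- (E1 (Pp p g)) by apply Pp_ge0. rewrite <- (E1 (Pp p f)) by apply Pp_ge0.
  rewrite <- rpow_mult by (auto || apply rpow_ge0).
  apply rpow_le; auto. split; [apply rpow_ge0|auto].
Qed.

Lemma lpn_lt {E : CBanach} {X : Type} p (g : X -> E) c eps : 0 < p -> 0 < eps ->
  Pp p g <= c -> c < rpow eps p -> lp_norm p g < eps.
Proof.
  intros Hp He H1 H2. rewrite lpn_eq.
  assert (0 < /p) by (apply Rinv_0_lt_compat; auto).
  assert (0 <= Pp p g) by apply Pp_ge0.
  eapply Rle_lt_trans. apply rpow_le; [auto|split; [auto|exact H1]].
  rewrite <- (rpow_inv eps p) by lra. apply rpow_lt; auto. lra.
Qed.

Lemma dominate {E : CBanach} {X : Type} p (f g : X -> E) : 0 < p ->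
  (forall x, bnorm (g x) <= bnorm (f x)) -> in_lp p f -> in_lp p g /\ Pp p g <= Pp p f.
Proof.
  intros Hp H Hf. apply Pp_le; [|apply Pp_ge0].
  intros l N. eapply Rle_trans; [|apply (sum_le_Pp p f l Hf N)].
  apply RS_le. intros x _. unfold nrm. apply rpow_le; auto. split; [apply bnorm_ge0|auto].
Qed.

Lemma bnorm_mult_op {E : CBanach} {X : Type} (h : X -> R) (f : X -> E) x :
  bnorm (mult_op h f x) = Rabs (h x) * bnorm (f x).
Proof. unfold mult_op. apply bnorm_rscal. Qed.

Lemma part_sum_le1 {X I : Type} p (phi : I -> X -> R) x (U : list I) (l0 : list I) :
  (forall i, phi i x <> 0 -> In i l0) ->
  (forall (l : list I), NoDup l -> (forall i, phi i x <> 0 -> In i l) ->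
      Rsum_list (map (fun i => rpow (phi i x) p) l) = 1) ->
  NoDup U -> RS (fun i => rpow (phi i x) p) U <= 1.
Proof.
  intros Hc H3 NU.
  destruct (nodup_sub l0 (fun i => phi i x <> 0 /\ ~ In i U)) as [W [NW HW]].
  assert (NV : NoDup (U ++ W)).
  { apply NoDup_app; auto. intros a Ha Hb. apply HW in Hb. tauto. }
  assert (E1 := H3 (U ++ W) NV).
  assert (Rsum_list (map (fun i => rpow (phi i x) p) (U ++ W)) = 1).
  { apply E1. intros i Hi. apply in_or_app. destruct (classic (In i U)); auto. right; apply HW; auto. }
  fold (RS (fun i => rpow (phi i x) p) (U ++ W)) in H. rewrite RS_app in H.
  assert (0 <= RS (fun i => rpow (phi i x) p) W) by (apply RS_nonneg; intros; apply rpow_ge0). lra.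
Qed.

Lemma approx_list {E : CBanach} {X I : Type} p (h : I -> X -> E) (U : list I) d :
  (forall i, In i U -> in_lp p (h i)) -> 0 < d -> 0 < p ->
  exists T, NoDup T /\ forall T', NoDup T' -> incl T T' ->
    RS (fun i => Pp p (h i)) U <= RS (fun i => RS (nrm p (h i)) T') U + d.
Proof.
  revert d; induction U as [|a U IH]; intros d Hl Hd Hp.
  - exists nil; split; [constructor|]. intros. rewrite !RS_nil; lra.
  - destruct (IH (d/2)) as [T1 [N1 H1]]; [intros; apply Hl; right; auto|lra|auto|].
    destruct (lp_approx p (h a) (d/2)) as [S [NS HS]]; [apply Hl; left; auto|lra|].
    destruct (nodup_sub (S ++ T1) (fun _ => True)) as [T [NT HT]].
    exists T; split; auto. intros T' NT' Hi. rewrite !RS_cons.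
    assert (A1 := H1 T' NT' ltac:(intros z Hz; apply Hi, HT; split; auto; apply in_or_app; auto)).
    assert (A2 : RS (nrm p (h a)) S <= RS (nrm p (h a)) T').
    { apply RS_incl; auto. intros z Hz; apply Hi, HT; split; auto; apply in_or_app; auto.
      intros; apply rpow_ge0. }
    lra.
Qed.

Lemma sumPp_le {E : CBanach} {X I : Type} p (h : I -> X -> E) (U : list I) c :
  0 < p -> (forall i, In i U -> in_lp p (h i)) ->
  (forall T, NoDup T -> RS (fun i => RS (nrm p (h i)) T) U <= c) ->
  RS (fun i => Pp p (h i)) U <= c.
Proof.
  intros Hp Hl H. apply Rnot_lt_le; intros C.
  set (d := (RS (fun i => Pp p (h i)) U - c) / 2).
  destruct (approx_list p h U d Hl ltac:(unfold d; lra) Hp) as [T [NT HT]].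
  assert (A1 := HT T NT (incl_refl _)). assert (A2 := H T NT). unfold d in A1. lra.
Qed.

Lemma nrm_mult_op {E : CBanach} {X : Type} p (h : X -> R) (f : X -> E) x :
  0 <= h x -> nrm p (mult_op h f) x = rpow (h x) p * nrm p f x.
Proof.
  intros H. unfold nrm. rewrite bnorm_mult_op, Rabs_pos_eq by auto.
  apply rpow_mult; auto. apply bnorm_ge0.
Qed.

Lemma mass_lemma {E : CBanach} {X I : Type} p (phi : I -> X -> R) (f : X -> E) (U : list I) (T0 : list X) :
  0 < p -> (forall i x, 0 <= phi i x <= 1) ->
  (forall x V, NoDup V -> RS (fun i => rpow (phi i x) p) V <= 1) ->
  in_lp p f -> NoDup U -> NoDup T0 ->
  (forall i x, In i U -> In x T0 -> phi i x = 0) ->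
  RS (fun i => Pp p (mult_op (phi i) f)) U <= Pp p f - RS (nrm p f) T0.
Proof.
  intros Hp Hphi Hs1 Hf NU N0 Hz.
  assert (Hl : forall i, in_lp p (mult_op (phi i) f)).
  { intros i. apply (dominate p f); auto. intros x. rewrite bnorm_mult_op, Rabs_pos_eq by apply Hphi.
    assert (0 <= bnorm (f x)) by apply bnorm_ge0. destruct (Hphi i x). nra. }
  apply sumPp_le; auto.
  intros T NT.
  destruct (nodup_sub T (fun x => ~ In x T0)) as [R2 [NR HR]].
  assert (NW : NoDup (T0 ++ R2)).
  { apply NoDup_app; auto. intros a A1 A2; apply HR in A2; tauto. }
  assert (S1 : RS (fun i => RS (nrm p (mult_op (phi i) f)) T) U
            <= RS (fun x => RS (fun i => nrm p (mult_op (phi i) f) x) U) T0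
             + RS (fun x => RS (fun i => nrm p (mult_op (phi i) f) x) U) R2).
  { rewrite <- RS_app.
    rewrite <- (RS_exchange (fun i x => nrm p (mult_op (phi i) f) x) U (T0 ++ R2)).
    apply RS_le. intros i _. apply RS_incl; auto.
    - intros x Hx. apply in_or_app. destruct (classic (In x T0)); auto. right; apply HR; auto.
    - intros; apply rpow_ge0. }
  assert (S2 : RS (fun x => RS (fun i => nrm p (mult_op (phi i) f) x) U) T0 = 0).
  { transitivity (RS (fun _ => 0) T0). apply RS_ext. intros x Hx.
    transitivity (RS (fun _ => 0) U). apply RS_ext. intros i Hi.
    rewrite nrm_mult_op by apply Hphi. rewrite (Hz i x Hi Hx), rpow_0. ring.
    clear. induction U; auto. rewrite RS_cons, IHU; ring.
    clear. induction T0; auto. rewrite RS_cons, IHT0; ring. }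
  assert (S3 : RS (fun x => RS (fun i => nrm p (mult_op (phi i) f) x) U) R2 <= RS (nrm p f) R2).
  { apply RS_le. intros x _.
    rewrite (RS_ext _ (fun i => nrm p f x * rpow (phi i x) p)) by (intros; rewrite nrm_mult_op by apply Hphi; ring).
    rewrite RS_scal. assert (0 <= nrm p f x) by apply rpow_ge0. assert (H1 := Hs1 x U NU). nra. }
  assert (S4 := sum_le_Pp p f _ Hf NW). rewrite RS_app in S4. lra.
Qed.

Lemma PW {E : CBanach} {I : Type} p (w : I -> R) (g : I -> E) G : 1 < p ->
  (forall i, 0 <= w i) -> RS (fun i => rpow (w i) p) G <= 1 ->
  rpow (bnorm (Esum (map (fun i => bscal (RtoC (rpow (w i) (p-1))) (g i)) G))) p
    <= RS (fun i => rpow (bnorm (g i)) p) G.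
Proof.
  intros Hp Hw H1.
  eapply Rle_trans; [|apply (holder_list w (fun i => bnorm (g i)) G p Hp); auto; intros; apply bnorm_ge0].
  apply rpow_le; [lra|split; [apply bnorm_ge0|]].
  eapply Rle_trans; [apply Esum_norm|]. rewrite map_map. fold (RS (fun i => bnorm (bscal (RtoC (rpow (w i) (p - 1))) (g i))) G).
  right. apply RS_ext. intros i _. rewrite bnorm_rscal, Rabs_pos_eq by apply rpow_ge0. reflexivity.
Qed.

Lemma XS {X I : Type} (S : list X) (G : X -> list I) (a : I -> X -> R) (Q : X -> R) c :
  NoDup S -> (forall x, In x S -> NoDup (G x)) ->
  (forall x, In x S -> Q x <= RS (fun i => a i x) (G x)) -> (forall i x, 0 <= a i x) ->
  (forall U, NoDup U -> (forall i, In i U -> exists x, In x S /\ In i (G x)) ->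
     RS (fun i => RS (a i) S) U <= c) ->
  RS Q S <= c.
Proof.
  intros NS NG HQ Ha HU.
  destruct (nodup_sub (flat_map G S) (fun _ => True)) as [U [NU HUU]].
  eapply Rle_trans; [|apply (HU U NU)].
  - rewrite <- RS_exchange. apply RS_le. intros x Hx. eapply Rle_trans; [apply HQ; auto|].
    apply RS_incl; auto. intros i Hi. apply HUU. split; auto. apply in_flat_map; eauto.
  - intros i Hi. apply HUU in Hi. destruct Hi as [Hi _]. apply in_flat_map in Hi. destruct Hi as [x [H1 H2]]; eauto.
Qed.

Lemma Esum_split {E : CBanach} {I : Type} (h : I -> E) (l l1 l2 : list I) (P : I -> Prop) :
  NoDup l -> NoDup l1 -> NoDup l2 ->
  (forall t, In t l1 <-> (In t l /\ P t)) -> (forall t, In t l2 <-> (In t l /\ ~ P t)) ->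
  Esum (map h l) = badd (Esum (map h l1)) (Esum (map h l2)).
Proof.
  intros N N1 N2 H1 H2. rewrite <- Esum_app, <- map_app. apply Esum_perm, Permutation_map.
  apply NoDup_Permutation; auto.
  - apply NoDup_app; auto. intros a A1 A2. apply H1 in A1; apply H2 in A2; tauto.
  - intros x. rewrite in_app_iff, H1, H2. split; [|tauto]. intros Hx. destruct (classic (P x)); tauto.
Qed.

Lemma scal_comm (E : CBanach) r c (v : E) : bscal (RtoC r) (bscal c v) = bscal c (bscal (RtoC r) v).
Proof.
  rewrite <- !bscal_mul. f_equal. destruct c; unfold Cmul, RtoC; simpl; f_equal; ring.
Qed.

Lemma zero_lp {E : CBanach} {X : Type} p : 0 < p -> in_lp p (fun _ : X => @bzero E).
Proof.
  intros Hp. apply (Pp_le p (fun _ : X => @bzero E) 0); [|lra]. intros l _.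
  right. transitivity (RS (fun _ => 0) l). apply RS_ext; intros; unfold nrm; rewrite bnorm0, rpow_0; auto.
  clear. induction l; auto. rewrite RS_cons, IHl; ring.
Qed.

Lemma mult_op_app {E : CBanach} {X : Type} (h : X -> R) (F : X -> E) x :
  mult_op h F x = bscal (RtoC (h x)) (F x).
Proof. reflexivity. Qed.

Theorem lemma6p3 (X : Type) (d : X -> X -> R) (E : CBanach) (p q : R)
  (I : Type) (phi : I -> X -> R) (J : I -> Prop)
  (B : I -> (X -> E) -> (X -> E)) (M : R) :
  is_space X d ->
  1 < p -> / p + / q = 1 ->
  metric_p_partition X d p I phi ->
  (forall i, J i -> is_bounded_op p (B i)) ->
  0 <= M -> (forall i, J i -> op_norm_le p (B i) M) ->
  exists A : (X -> E) -> (X -> E),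
    is_band_op d p A /\ op_norm_le p A M /\
    (* strong convergence of the unordered sum over J of phi_i^(p/q) B_i phi_i *)
    (forall f, in_lp p f -> forall eps, 0 < eps ->
       exists F0 : list I, (forall i, In i F0 -> J i) /\
       forall F : list I, NoDup F -> (forall i, In i F -> J i) -> incl F0 F ->
         lp_norm p
           (fsub (fun x => Esum (map (fun i =>
                    mult_op (fun y => rpow (phi i y) (p / q))
                            (B i (mult_op (phi i) f)) x) F))
                 (A f)) < eps).
Proof.
  intros Hsp Hp Hpq Hpart HB HM HBn.
  destruct Hpart as [Hphi [[N Hcov] [[D Hdiam] Hsum]]].
  destruct Hsp as [_ [Hd0 _]].
  assert (Hp0 : 0 < p) by lra.
  assert (pq : p / q = p - 1).
  { unfold Rdiv. replace (/q) with (1 - /p) by lra. field; lra. }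
  assert (psum1 : forall x V, NoDup V -> RS (fun i => rpow (phi i x) p) V <= 1).
  { intros x V NV. destruct (Hcov x) as [l0 [_ Hl0]].
    apply (part_sum_le1 p phi x V l0); auto. }
  assert (HL : forall x, {l : list I | NoDup l /\ forall i, In i l <-> (phi i x <> 0 /\ J i)}).
  { intros x. apply constructive_indefinite_description.
    destruct (Hcov x) as [l0 [_ Hl0]].
    destruct (nodup_sub l0 (fun i => phi i x <> 0 /\ J i)) as [l [Nl Hl]].
    exists l; split; auto. intros i; rewrite Hl; split; [tauto|]. intros [h1 h2]; auto. }
  set (L := fun x => proj1_sig (HL x)).
  assert (HLn : forall x, NoDup (L x)) by (intros x; exact (proj1 (proj2_sig (HL x)))).
  assert (HLi : forall x i, In i (L x) <-> (phi i x <> 0 /\ J i)) by (intros x; exact (proj2 (proj2_sig (HL x)))).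
  set (mp := rpow M p).
  assert (Hmp : 0 <= mp) by apply rpow_ge0.
  assert (Hmlp : forall i (f : X -> E), in_lp p f -> in_lp p (mult_op (phi i) f)).
  { intros i f Hf. apply (dominate p f); auto. intros x. rewrite bnorm_mult_op, Rabs_pos_eq by apply Hphi.
    assert (0 <= bnorm (f x)) by apply bnorm_ge0. destruct (Hphi i x). nra. }
  assert (HgP : forall i (f : X -> E), J i -> in_lp p f ->
     in_lp p (B i (mult_op (phi i) f)) /\ Pp p (B i (mult_op (phi i) f)) <= mp * Pp p (mult_op (phi i) f)).
  { intros i f Hj Hf. destruct (HB i Hj) as [Hl _]. split. apply Hl, Hmlp, Hf.
    apply Pp_le_of_lpn; auto. apply HBn; auto. }
  assert (HX : forall (f : X -> E), in_lp p f -> forall (G : X -> list I) (T0 : list X),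
     (forall x, NoDup (G x)) -> (forall x i, In i (G x) -> J i) ->
     (forall x i x0, In i (G x) -> In x0 T0 -> phi i x0 = 0) -> NoDup T0 ->
     forall S, NoDup S ->
     RS (fun x => rpow (bnorm (Esum (map (fun i => mult_op (fun y => rpow (phi i y) (p / q))
                    (B i (mult_op (phi i) f)) x) (G x)))) p) S
       <= mp * (Pp p f - RS (nrm p f) T0)).
  { intros f Hf G T0 HGn HGJ HGz N0 S NS.
    apply (XS S G (fun i x => nrm p (B i (mult_op (phi i) f)) x)); auto.
    - intros x _.
      replace (map (fun i => mult_op (fun y => rpow (phi i y) (p / q)) (B i (mult_op (phi i) f)) x) (G x))
        with (map (fun i => bscal (RtoC (rpow (phi i x) (p-1))) (B i (mult_op (phi i) f) x)) (G x))
        by (apply map_ext; intros; unfold mult_op at 1; rewrite pq; reflexivity).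
      apply (PW p (fun i => phi i x) (fun i => B i (mult_op (phi i) f) x)); auto.
      intros i; apply Hphi.
    - intros; apply rpow_ge0.
    - intros U NU HU.
      assert (HUJ : forall i, In i U -> J i).
      { intros i Hi. destruct (HU i Hi) as [x [_ Hx]]. eapply HGJ; eauto. }
      eapply Rle_trans with (RS (fun i => mp * Pp p (mult_op (phi i) f)) U).
      + apply RS_le. intros i Hi. destruct (HgP i f (HUJ i Hi) Hf) as [H1 H2].
        eapply Rle_trans; [apply sum_le_Pp; auto|exact H2].
      + rewrite RS_scal. apply Rmult_le_compat_l; auto.
        apply mass_lemma; auto.
        intros i x0 Hi Hx0. destruct (HU i Hi) as [x [_ Hx]]. eapply HGz; eauto. }
  set (A := fun (f : X -> E) (x : X) => Esum (map (fun i => mult_op (fun y => rpow (phi i y) (p / q))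
                    (B i (mult_op (phi i) f)) x) (L x))).
  assert (HAf : forall f, in_lp p f -> in_lp p (A f) /\ Pp p (A f) <= mp * Pp p f).
  { intros f Hf.
    assert (0 <= Pp p f) by apply Pp_ge0.
    replace (mp * Pp p f) with (mp * (Pp p f - RS (nrm p f) nil)) by (rewrite RS_nil; ring).
    apply Pp_le.
    - intros S NS. apply (HX f Hf L nil); auto.
      + intros x i Hi. apply HLi in Hi; tauto.
      + intros x i x0 _ [].
      + constructor.
    - rewrite RS_nil. nra. }
  assert (Hnorm : op_norm_le p A M).
  { intros f Hf. destruct (HAf f Hf) as [_ H]. apply lpn_le_of_Pp; auto. }
  exists A. split; [split|split; [exact Hnorm|]].
  -
    split; [intros f Hf; apply HAf, Hf|]. split; [|split; [|exists M; exact Hnorm]].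
    + intros f g Hf Hg x. unfold A. rewrite <- Esum_add. f_equal. apply map_ext_in. intros i Hi.
      apply HLi in Hi. destruct Hi as [_ Hj].
      destruct (HB i Hj) as [_ [Hadd [Hhom _]]].
      assert (H : mult_op (phi i) (fadd f g) = fadd (mult_op (phi i) f) (mult_op (phi i) g))
        by (apply functional_extensionality; intros z; unfold mult_op, fadd; apply bscal_addv).
      rewrite H, !mult_op_app. rewrite Hadd by (apply Hmlp; auto). apply bscal_addv.
    + intros c f Hf x. unfold A. rewrite <- Esum_scal. f_equal. apply map_ext_in. intros i Hi.
      apply HLi in Hi. destruct Hi as [_ Hj].
      destruct (HB i Hj) as [_ [Hadd [Hhom _]]].
      assert (H : mult_op (phi i) (fscal c f) = fscal c (mult_op (phi i) f))
        by (apply functional_extensionality; intros z; unfold mult_op, fscal; apply scal_comm).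
      rewrite H, !mult_op_app. rewrite Hhom by (apply Hmlp; auto). apply scal_comm.
  -
    exists D. intros x y Hxy e. unfold A. apply Esum_zero. intros v Hv.
    apply in_map_iff in Hv. destruct Hv as [i [<- Hi]]. apply HLi in Hi. destruct Hi as [Hix Hj].
    assert (Z : mult_op (phi i) (delta d y e) = fun _ => bzero).
    { apply functional_extensionality; intros z. unfold mult_op, delta.
      destruct (Req_EM_T (d z y) 0) as [E0|E0].
      - apply Hd0 in E0. subst z.
        assert (H : phi i y = 0).
        { apply NNPP; intro H. assert (d x y <= D) by (apply (Hdiam i); auto). lra. }
        rewrite H. apply bscal0.
      - apply scal_zero. }
    rewrite Z, mult_op_app.
    assert (H : B i (fun _ => bzero) x = bzero).
    { replace (fun _ : X => @bzero E) with (fscal (RtoC 0) (fun _ : X => @bzero E))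
        by (apply functional_extensionality; intros z; unfold fscal; apply bscal0).
      destruct (HB i Hj) as [_ [_ [Hhom _]]]. rewrite Hhom by (apply zero_lp; lra). apply bscal0. }
    rewrite H. apply scal_zero.
  -
    intros f Hf eps Heps.
    assert (He : 0 < rpow eps p) by (apply rpow_gt0; auto).
    set (dl := rpow eps p / (mp + 1)).
    assert (Hdl : 0 < dl) by (unfold dl; apply Rdiv_lt_0_compat; lra).
    destruct (lp_approx p f dl Hf Hdl) as [T0 [N0 HT0]].
    destruct (nodup_sub (flat_map L T0) (fun _ => True)) as [F0 [NF0 HF0]].
    exists F0. split.
    { intros i Hi; apply HF0 in Hi; destruct Hi as [Hi _]; apply in_flat_map in Hi.
      destruct Hi as [x [_ Hx]]; apply HLi in Hx; tauto. }
    intros F NF HFJ Hinc.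
    set (G2 := fun x => proj1_sig (constructive_indefinite_description _ (nodup_sub (L x) (fun i => ~ In i F)))).
    assert (HG2 : forall x, NoDup (G2 x) /\ forall t, In t (G2 x) <-> (In t (L x) /\ ~ In t F))
      by (intros x; exact (proj2_sig (constructive_indefinite_description _ (nodup_sub (L x) (fun i => ~ In i F))))).
    assert (Hpt : forall x,
      bnorm (fsub (fun x => Esum (map (fun i =>
                    mult_op (fun y => rpow (phi i y) (p / q))
                            (B i (mult_op (phi i) f)) x) F)) (A f) x)
      = bnorm (Esum (map (fun i => mult_op (fun y => rpow (phi i y) (p / q))
                    (B i (mult_op (phi i) f)) x) (G2 x)))).
    { intros x. unfold fsub, A.
      set (t := fun i => mult_op (fun y => rpow (phi i y) (p / q)) (B i (mult_op (phi i) f)) x).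
      destruct (nodup_sub F (fun i => In i (L x))) as [F1 [NF1 HF1]].
      destruct (nodup_sub F (fun i => ~ In i (L x))) as [F2 [NF2 HF2]].
      rewrite (Esum_split t F F1 F2 (fun i => In i (L x))) by auto.
      assert (Z2 : Esum (map t F2) = bzero).
      { apply Esum_zero. intros v Hv. apply in_map_iff in Hv. destruct Hv as [i [<- Hi]].
        apply HF2 in Hi. destruct Hi as [Hi1 Hi2].
        assert (Hz : phi i x = 0).
        { apply NNPP; intro H. apply Hi2, HLi. split; auto. }
        unfold t. rewrite mult_op_app, Hz, rpow_0. apply bscal0. }
      destruct (HG2 x) as [NG2 HG2x].
      destruct (nodup_sub (L x) (fun i => In i F)) as [G1 [NG1 HG1]].
      rewrite (Esum_split t (L x) G1 (G2 x) (fun i => In i F)) by auto.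
      assert (P1 : Esum (map t F1) = Esum (map t G1)).
      { apply Esum_perm, Permutation_map, NoDup_Permutation; auto.
        intros i. rewrite HF1, HG1. tauto. }
      rewrite Z2, badd_zero, P1, sub_add_cancel, bnorm_opp. reflexivity. }
    assert (HRT : RS (nrm p f) T0 <= Pp p f) by (apply sum_le_Pp; auto).
    assert (HP : Pp p (fsub (fun x => Esum (map (fun i =>
                    mult_op (fun y => rpow (phi i y) (p / q))
                            (B i (mult_op (phi i) f)) x) F)) (A f))
                 <= mp * (Pp p f - RS (nrm p f) T0)).
    { apply Pp_le; [|apply Rmult_le_pos; lra].
      intros S NS. unfold nrm. rewrite (RS_ext _ _ S (fun x _ => f_equal (fun z => rpow z p) (Hpt x))).
      apply (HX f Hf G2 T0); auto.
      - intros x; apply HG2.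
      - intros x i Hi. apply HG2 in Hi. destruct Hi as [Hi _]. apply HLi in Hi; tauto.
      - intros x i x0 Hi Hx0. apply HG2 in Hi. destruct Hi as [Hi Hni].
        apply NNPP; intro H. apply Hni, Hinc, HF0. split; auto.
        apply in_flat_map. exists x0; split; auto. apply HLi. split; auto. apply HLi in Hi; tauto. }
    apply (lpn_lt p _ (mp * (Pp p f - RS (nrm p f) T0)) eps); auto.
    assert (mp * (Pp p f - RS (nrm p f) T0) <= mp * dl) by (apply Rmult_le_compat_l; lra).
    assert (mp * dl < rpow eps p).
    { unfold dl. replace (mp * (rpow eps p / (mp + 1))) with (rpow eps p - rpow eps p / (mp + 1)) by (field; lra).
      assert (0 < rpow eps p / (mp + 1)) by (apply Rdiv_lt_0_compat; lra). lra. }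
    lra.
Qed.
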